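(* Consider a Stochastic Non-atomic Congestion Game (SNCG) as described in the context, with a non-atomic agent measure $m$, in which agents are divided into multiple types. Let $\bm{\pi}^*$ be a Nash equilibrium joint policy. Then for every global state $s$ and every local state $z$, any two agents of the same type that are both in local state $z$ have equal values at $s$ under $\bm{\pi}^*$.
   Context: An SNCG is a tuple $\langle \mathcal{N}, \mathcal{Z}, \mathcal{S}, \mathcal{A}, \mathcal{T}, \mathcal{R}\rangle$. The set of agents $\mathcal{N}$ is endowed with a finite non-atomic Lebesgue measure $m$ ($m(\{i\})=0$ for each agent $i$, $m(\mathcal{N})=1$). $\mathcal{Z}$ is a finite set of local states; in a global state $s$, $\mathcal{N}$ is partitioned into the sets $\mathcal{N}^s_z$ of agents in local state $z$, and $s$ is identified with the distribution of masses of agents over local states. Each local state $z$ has an action set $\mathcal{A}_z$; a policy $\pi_i = (\pi_{iz}(s))_{s,z}$ of agent $i$ gives a distribution over $\mathcal{A}_z$ in each $(s,z)$. The joint action $\bm{a}$ is the collection of masses $f^a_z(s)$ of agents in local state $z$ choosing action $a$, and $\phi^a(s,\bm{a}) = \sum_z f^a_z(s)$. Rewards $\mathcal{R}_z$ depend on the global state, the local state and these masses (non-increasing, continuous), and global transitions $\mathcal{T}(s'\mid s,\bm{a})$ depend only on these masses. With multiple agent types, agents of the same type in the same local state have the same available actions and reward functions (rewards and transitions do not depend on agent identities beyond type). With discount $\gamma$, the value of agent $j$ in local state $z$ is $v_{jz}(s,\pi_{jz},\bm{\pi}_{-j}) = \mathcal{R}_z(s,\phi^{\pi_{jz}(s)}(s,\bm{a}))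 + \gamma\int_{s'}\mathcal{T}(s'\mid s,\bm{a})v_{jz'}(s',\pi_{jz'},\bm{\pi}_{-j})\,ds'$. A joint policy $\bm{\pi}$ is a Nash equilibrium if no agent in any global and local state can increase its value by unilaterally changing its local policy. *)

(* Defs.v *)
From HB Require Import structures.
From mathcomp Require Import all_boot all_order all_algebra.
From mathcomp Require Import all_classical all_reals all_analysis.
Set Implicit Arguments. Unset Strict Implicit. Unset Printing Implicit Defensive.
Import Order.TTheory GRing.Theory Num.Theory.
Local Open Scope classical_set_scope.
Local Open Scope ring_scope.

Section SNCG.
Context {R : realType} {dN dS : measure_display}
  {N : measurableType dN} (* agents *)
  {S : measurableType dS} (* global states *)
  {Z Act : finType}       (* local states, actions *)
  {Ty : Type}.

Definition local_dist (A : {set Act}) (p : Act -> R) : Prop :=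
  [/\ forall a, 0 <= p a, forall a, a \notin A -> p a = 0 & \sum_a p a = 1].

Definition policy_ok (avail : Ty -> Z -> {set Act}) (t : Ty)
  (p : S -> Z -> Act -> R) : Prop :=
  forall s z, local_dist (avail t z) (p s z).

(* A joint policy: each agent's policy is valid, and the profile is measurable
   in the agent (so that the masses below are well defined). *)
Definition joint_policy_ok (avail : Ty -> Z -> {set Act}) (ty : N -> Ty)
  (pi : N -> S -> Z -> Act -> R) : Prop :=
  (forall i, policy_ok avail (ty i) (pi i)) /\
  (forall s z a, measurable_fun setT (fun i => pi i s z a)).

Definition mass (m : {measure set N -> \bar R}) (loc : S -> N -> Z)
  (pi : N -> S -> Z -> Act -> R) (s : S) (z : Z) (a : Act) : R :=
  Rintegral m (loc s @^-1` [set z]) (fun i => pi i s z a).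

Definition phi (M : Z -> Act -> R) (a : Act) : R := \sum_z M z a.

(* Bellman operator for one agent of fixed type (reward Rw, individual
   local-state transition P), with own policy p, facing the mass profile M. *)
Definition bellman (gamma : R) (Rw : Z -> S -> Act -> R -> R)
  (T : S -> (Z -> Act -> R) -> probability S R)
  (P : Z -> Act -> S -> (Z -> Act -> R) -> S -> Z -> R)
  (p : S -> Z -> Act -> R) (M : S -> Z -> Act -> R) (W : S -> Z -> R)
  : S -> Z -> R :=
  fun s z => \sum_a p s z a *
    (Rw z s a (phi (M s) a) +
     gamma * Rintegral (T s (M s)) setT
               (fun s' => \sum_z' P z a s (M s) s' z' * W s' z')).

Definition is_value gamma Rw T P p M (W : S -> Z -> R) : Prop :=
  [/\ exists C : R, forall s z, `|W s z| <= C,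
      forall z, measurable_fun setT (fun s => W s z)
    & bellman gamma Rw T P p M W = W].

Definition value gamma Rw T P p M : S -> Z -> R :=
  match pselect (exists W, is_value gamma Rw T P p M W) with
  | left h => projT1 (cid h)
  | right _ => fun _ _ => 0
  end.

Definition deviate (pi : N -> S -> Z -> Act -> R) (j : N)
  (p : S -> Z -> Act -> R) : N -> S -> Z -> Act -> R :=
  fun i => if `[< i = j >] then p else pi i.

Definition agent_value (m : {measure set N -> \bar R}) (ty : N -> Ty)
  (loc : S -> N -> Z) (Rw : Ty -> Z -> S -> Act -> R -> R)
  (T : S -> (Z -> Act -> R) -> probability S R)
  (P : Ty -> Z -> Act -> S -> (Z -> Act -> R) -> S -> Z -> R)
  (gamma : R) (pi : N -> S -> Z -> Act -> R) (j : N) : S -> Z -> R :=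
  value gamma (Rw (ty j)) T (P (ty j)) (pi j) (mass m loc pi).

Definition nash (m : {measure set N -> \bar R}) (ty : N -> Ty)
  (loc : S -> N -> Z) (avail : Ty -> Z -> {set Act})
  (Rw : Ty -> Z -> S -> Act -> R -> R)
  (T : S -> (Z -> Act -> R) -> probability S R)
  (P : Ty -> Z -> Act -> S -> (Z -> Act -> R) -> S -> Z -> R)
  (gamma : R) (pi : N -> S -> Z -> Act -> R) : Prop :=
  forall (j : N) (p : S -> Z -> Act -> R), policy_ok avail (ty j) p ->
  forall s : S,
    agent_value m ty loc Rw T P gamma (deviate pi j p) j s (loc s j)
    <= agent_value m ty loc Rw T P gamma pi j s (loc s j).

End SNCG.

(* Main.v *)
Require Import Defs.
From HB Require Import structures.
From mathcomp Require Import all_boot all_order all_algebra.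
From mathcomp Require Import all_classical all_reals all_analysis.
From mathcomp Require Import measurable_realfun.
Import Order.TTheory GRing.Theory Num.Theory.
Import numFieldNormedType.Exports.
Local Open Scope classical_set_scope.
Local Open Scope ring_scope.

Lemma mass_dev (R : realType) (dN dS : measure_display)
  (N : measurableType dN) (S : measurableType dS) (Z Act : finType)
  (m : {measure set N -> \bar R})
  (m_nonatomic : forall i : N, measurable [set i] /\ m [set i] = 0%E)
  (loc : S -> N -> Z)
  (loc_meas : forall (s : S) (z : Z), measurable (loc s @^-1` [set z]))
  (pi : N -> S -> Z -> Act -> R)
  (pim : forall s z a, measurable_fun setT (fun i => pi i s z a))
  j p : mass m loc (deviate pi j p) = mass m loc pi.
Proof.
apply/funext => s; apply/funext => z; apply/funext => a.
rewrite /mass /Rintegral; congr fine.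
have [mj mj0] := m_nonatomic j.
have md : measurable_fun setT (fun i => deviate pi j p i s z a).
  rewrite (_ : (fun i => _) = fun i => if `[< i = j >] then p s z a else pi i s z a);
    last by apply/funext => i; rewrite /deviate; case: ifP.
  apply: (measurable_fun_ifT (f := fun i => `[< i = j >])) => //.
  apply: (measurable_fun_bool true).
  rewrite setTI (_ : _ @^-1` _ = [set j]) //.
  by apply/seteqP; split => x /=; [move/asboolP|move=> ->; apply/asboolP].
apply: ae_eq_integral => //.
- apply: (measurable_funS measurableT) => //.
  exact/measurable_EFinP/md.
- apply: (measurable_funS measurableT) => //.
  exact/measurable_EFinP/(pim s z a).
- exists [set j]; split => // x /= /not_implyP [_ h].
  apply: contrapT => hx; apply: h; rewrite /deviate.
  by case: asboolP.
Qed.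

Theorem corollary1 (R : realType) (dN dS : measure_display)
  (N : measurableType dN) (S : measurableType dS) (Z Act : finType) (Ty : Type)
  (m : probability N R)
  (m_nonatomic : forall i : N, measurable [set i] /\ m [set i] = 0%E)
  (ty : N -> Ty) (loc : S -> N -> Z)
  (loc_meas : forall (s : S) (z : Z), measurable (loc s @^-1` [set z]))
  (avail : Ty -> Z -> {set Act})
  (Rw : Ty -> Z -> S -> Act -> R -> R)
  (Rw_noninc : forall t z s a, {homo Rw t z s a : x y /~ x <= y})
  (Rw_cont : forall t z s a, continuous (Rw t z s a))
  (T : S -> (Z -> Act -> R) -> probability S R)
  (P : Ty -> Z -> Act -> S -> (Z -> Act -> R) -> S -> Z -> R)
  (P_dist : forall t z a s M s',
     (forall z', 0 <= P t z a s M s' z') /\ \sum_z' P t z a s M s' z' = 1)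
  (gamma : R) (gamma_01 : 0 <= gamma < 1)
  (pi : N -> S -> Z -> Act -> R)
  (pi_ok : joint_policy_ok avail ty pi)
  (pi_nash : nash m ty loc avail Rw T P gamma pi) :
  forall (s : S) (z : Z) (i j : N), ty i = ty j -> loc s i = z -> loc s j = z ->
    agent_value m ty loc Rw T P gamma pi i s z =
    agent_value m ty loc Rw T P gamma pi j s z.
Proof.
have key : forall i j, ty i = ty j -> forall s,
    agent_value m ty loc Rw T P gamma pi j s (loc s i) <=
    agent_value m ty loc Rw T P gamma pi i s (loc s i).
  move=> i j hij s.
  have hok : policy_ok avail (ty i) (pi j) by rewrite hij; exact: pi_ok.1.
  have := pi_nash i (pi j) hok s.
  have hd : deviate pi i (pi j) i = pi j.
    by rewrite /deviate; case: asboolP.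
  rewrite /agent_value (@mass_dev _ _ _ _ _ _ _ m m_nonatomic loc loc_meas pi pi_ok.2) hd.
  rewrite hij; exact.
move=> s z i j hij hi hj.
apply/eqP; rewrite eq_le; apply/andP; split.
- by have := key j i (esym hij) s; rewrite hj.
- by have := key i j hij s; rewrite hi.
Qed.
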